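(* Let $C>0$, $c_{1,i}=\frac{\beta_i}{2C}$, $r=\sqrt{u^2+v^2}$, and for $i=1,2$ let $\varphi_{0,i}(u,v,z)=r^{p_i}z^{q_i}$ and $\varphi_{1,i}(u,v,z)=\frac{r^{p_i}z^{q_i}}{(C^{-2}+1)^{\beta_i/2}}\left|\frac{r}{v}\right|^{\beta_i}+c_{1,i}r^{p_i}z^{q_i}\left|\frac{r}{v}\right|^{\beta_i}\int_{u/|v|}^{1/C}(t^2+1)^{\frac{\alpha_i-\beta_i-1}{2}}\,dt.$ Then for all $C=C(h)>0$ sufficiently large, $\left(\partial_u\varphi_{0,i}-\partial_u\varphi_{1,i}\right)\le0$ at every point $(u,v,z)$ with $Cu=|v|$, $v\neq 0$, $0<z\le1$, $i=1,2$.
   Context: Fix $h\in(0,1)$ and $\alpha_h=\frac13+\frac23h$. Constants $p_i,q_i,\alpha_i,\beta_i$ ($i=1,2$) satisfy $p_1>0$, $p_2>0$, $q_1=0$, $q_2>0$, $0<\alpha_hp_i-(1-h)q_i=\beta_i<\alpha_i<1$, $q_2>\frac13p_2+\frac12\alpha_2$, $p_2>p_1$, $p_2+\frac32\alpha_2>p_1+\frac32\alpha_1$. *)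

(* Defs.v *)
From Stdlib Require Import Reals Lra.
From Coquelicot Require Import Coquelicot.
Open Scope R_scope.

Definition alpha_h (h : R) : R := 1/3 + 2/3 * h.

Definition rr (u v : R) : R := sqrt (u ^ 2 + v ^ 2).

(* phi_0(u,v,z) = r^p z^q  (real powers via Rpower, arguments positive where used) *)
Definition phi0 (p q u v z : R) : R := Rpower (rr u v) p * Rpower z q.

Definition c1 (C be : R) : R := be / (2 * C).

Definition phi1 (C p q al be u v z : R) : R :=
  Rpower (rr u v) p * Rpower z q / Rpower (/ C ^ 2 + 1) (be / 2)
    * Rpower (Rabs (rr u v / v)) be
  + c1 C be * Rpower (rr u v) p * Rpower z q * Rpower (Rabs (rr u v / v)) be
    * RInt (fun t => Rpower (t ^ 2 + 1) ((al - be - 1) / 2)) (u / Rabs v) (/ C).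

Definition du_diff_nonpos (C p q al be u v z : R) : Prop :=
  Derive (fun x => phi0 p q x v z) u - Derive (fun x => phi1 C p q al be x v z) u <= 0.

(* Main.v *)
Require Import Defs.
From Stdlib Require Import Reals Lra.
From Coquelicot Require Import Coquelicot.
Open Scope R_scope.
From Stdlib Require Import Reals Lra.

Lemma D_rp (k w a x : R) : 0 < k -> 0 < w ->
  is_derive (fun x => Rpower (k * (x^2 + w)) a) x
    (Rpower (k * (x^2+w)) a * (a * (2*x) / (x^2+w))).
Proof.
  intros Hk Hw. assert (0 < x^2 + w) by nra.
  unfold Rpower. auto_derive.
  - nra.
  - replace (x*(x*1)) with (x^2) by ring. field. lra.
Qed.

Lemma rp_sqrt (y p : R) : 0 < y -> Rpower (sqrt y) p = Rpower (1 * y) (p/2).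
Proof.
  intros H. rewrite <- Rpower_sqrt by lra. rewrite Rpower_mult, Rmult_1_l.
  f_equal. field.
Qed.

Lemma abs_sqrt_div (y v : R) : 0 < y -> v <> 0 ->
  Rabs (sqrt y / v) = sqrt (/ v^2 * y).
Proof.
  intros Hy Hv.
  rewrite sqrt_mult_alt. 2: { apply Rlt_le, Rinv_0_lt_compat. nra. }
  rewrite sqrt_inv. replace (v^2) with (Rsqr v) by (unfold Rsqr; ring).
  rewrite sqrt_Rsqr_abs. unfold Rdiv. rewrite Rabs_mult, Rabs_inv.
  rewrite (Rabs_pos_eq (sqrt y)) by apply sqrt_pos. ring.
Qed.

Lemma g_cont (e t : R) : continuous (fun t => Rpower (t^2+1) e) t.
Proof.
  apply (@ex_derive_continuous R_AbsRing R_NormedModule). unfold Rpower. auto_derive. nra.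
Qed.

Lemma D_int (e b c x : R) : 0 < c ->
  is_derive (fun x => RInt (fun t => Rpower (t^2+1) e) (x / c) b) x
    (- Rpower ((x/c)^2+1) e * / c).
Proof.
  intros Hc.
  replace (- Rpower ((x/c)^2+1) e * / c) with (/c * - Rpower ((x/c)^2+1) e) by ring.
  apply (is_derive_comp (fun a => RInt (fun t => Rpower (t^2+1) e) a b) (fun x => x / c) x
     (- Rpower ((x/c)^2+1) e) (/c)).
  - apply (is_derive_RInt' (fun t => Rpower (t^2+1) e) (fun a => RInt (fun t => Rpower (t^2+1) e) a b) _ b).
    + apply filter_forall. intros a0. apply (@RInt_correct R_CompleteNormedModule). apply (@ex_RInt_continuous R_CompleteNormedModule).
      intros; apply g_cont.
    + apply g_cont.
  - auto_derive. lra. field. lra.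
Qed.

Lemma isd_mult f g x df dg : is_derive f x df -> is_derive g x dg ->
  is_derive (fun t => f t * g t) x (df * g x + f x * dg).
Proof. intros. apply (is_derive_mult f g x df dg); auto. intros; apply Rmult_comm. Qed.

Lemma isd_plus f g x df dg : is_derive f x df -> is_derive g x dg ->
  is_derive (fun t => f t + g t) x (df + dg).
Proof. intros. apply (is_derive_plus f g x df dg); auto. Qed.

Lemma isd_const (a x : R) : is_derive (fun _ => a) x 0.
Proof. apply (is_derive_const a x). Qed.

Lemma rA (x v p : R) : v <> 0 -> Rpower (rr x v) p = Rpower (1 * (x^2 + v^2)) (p/2).
Proof. intros. unfold rr. apply rp_sqrt. assert (0 < v^2) by (apply pow2_gt_0; auto). nra. Qed.

Lemma rB (x v b : R) : v <> 0 -> Rpower (Rabs (rr x v / v)) b = Rpower (/ v^2 * (x^2 + v^2)) (b/2).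
Proof.
  intros. assert (0 < v^2) by (apply pow2_gt_0; auto).
  unfold rr. rewrite abs_sqrt_div by (auto; nra). rewrite rp_sqrt, Rmult_1_l. auto.
  apply Rmult_lt_0_compat. apply Rinv_0_lt_compat; auto. nra.
Qed.

Lemma rp_pos x y : 0 < Rpower x y.
Proof. unfold Rpower. apply exp_pos. Qed.

Lemma rp_le1 T e : 1 <= T -> e <= 0 -> Rpower T e <= 1.
Proof.
  intros. unfold Rpower. rewrite <- exp_0.
  assert (0 <= ln T). { rewrite <- ln_1. destruct H. apply Rlt_le, ln_increasing; lra. subst; lra. }
  assert (e * ln T <= 0) by nra.
  destruct (Rle_lt_or_eq_dec _ _ H2). apply Rlt_le, exp_increasing; auto. rewrite e0; lra.
Qed.

Lemma key (K p q al be v z : R) : 1 <= K -> v <> 0 -> 0 < be -> al < 1 ->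
  du_diff_nonpos K p q al be (Rabs v / K) v z.
Proof.
  intros HC Hv Hbe Hal.
  assert (Hv2 : 0 < v^2) by (apply pow2_gt_0; auto).
  assert (Ha : 0 < Rabs v) by (apply Rabs_pos_lt; auto).
  assert (Hva : v^2 = Rabs v ^2) by (rewrite pow2_abs; auto).
  set (u := Rabs v / K).
  assert (Hu : 0 < u) by (unfold u; apply Rdiv_lt_0_compat; lra).
  set (g := fun t => Rpower (t^2+1) ((al - be - 1)/2)).
  eassert (H0 : is_derive (fun x => phi0 p q x v z) u _).
  { eapply is_derive_ext with (f := fun x => Rpower (1 * (x^2 + v^2)) (p/2) * Rpower z q).
    - intros t. unfold phi0. rewrite rA; auto.
    - apply isd_mult. apply D_rp; lra. apply isd_const. }
  eassert (H1 : is_derive (fun x => phi1 K p q al be x v z) u _).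
  { eapply is_derive_ext with (f := fun x =>
       Rpower (1 * (x^2 + v^2)) (p/2) * Rpower z q * / Rpower (/ K ^ 2 + 1) (be / 2)
         * Rpower (/ v^2 * (x^2 + v^2)) (be/2)
       + Defs.c1 K be * Rpower (1 * (x^2 + v^2)) (p/2) * Rpower z q * Rpower (/ v^2 * (x^2 + v^2)) (be/2)
         * RInt g (x / Rabs v) (/ K)).
    - intros t. unfold phi1. rewrite rA, rB; auto.
    - apply isd_plus.
      + apply isd_mult. apply isd_mult. apply isd_mult. apply D_rp; lra. apply isd_const. apply isd_const.
        apply D_rp. apply Rinv_0_lt_compat; auto. auto.
      + apply isd_mult. apply isd_mult. apply isd_mult. apply isd_mult. apply isd_const.
        apply D_rp; lra. apply isd_const. apply D_rp. apply Rinv_0_lt_compat; auto. auto.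
        apply D_int; auto. }
  unfold du_diff_nonpos.
  apply is_derive_unique in H0. apply is_derive_unique in H1.
  match type of H0 with _ = ?d => set (d0 := d) in H0 end.
  match type of H1 with _ = ?d => set (d1 := d) in H1 end.
  assert (EE: Derive (fun x => phi0 p q x v z) u = d0) by exact H0.
  assert (EE1: Derive (fun x => phi1 K p q al be x v z) u = d1) by exact H1.
  rewrite EE, EE1. clear H0 H1 EE EE1. unfold d0, d1. cbv beta.
  set (T := / K^2 + 1).
  assert (E1 : / v^2 * (u^2 + v^2) = T) by (unfold T, u; rewrite Hva; field; lra).
  assert (E2 : u / Rabs v = / K) by (unfold u; field; lra).
  assert (E3 : (/ K)^2 + 1 = T) by (unfold T; field; lra).
  rewrite E1, E2, E3. assert (HI : RInt g (/K) (/K) = 0) by exact (@RInt_point R_CompleteNormedModule (/K) g). rewrite HI.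
  unfold g.
  assert (HPG : Rpower T (be/2) * Rpower T ((al - be - 1)/2) = Rpower T ((al-1)/2)).
  { rewrite <- Rpower_plus. f_equal. field. }
  assert (HT1 : 1 <= T). { unfold T. assert (0 < / K^2) by (apply Rinv_0_lt_compat; nra). lra. }
  assert (HT2 : T <= 2). { unfold T. assert (/ K^2 <= 1). { rewrite <- Rinv_1. apply Rinv_le_contravar; nra. } lra. }
  assert (HR : Rpower T ((al-1)/2) <= 1) by (apply rp_le1; lra).
  assert (HP : 0 < Rpower T (be/2)) by apply rp_pos.
  assert (HA : 0 < Rpower (1 * (u ^ 2 + v ^ 2)) (p / 2)) by apply rp_pos.
  assert (HZ : 0 < Rpower z q) by apply rp_pos.
  set (A := Rpower (1 * (u ^ 2 + v ^ 2)) (p / 2)) in *.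
  set (Z := Rpower z q) in *.
  set (P := Rpower T (be/2)) in *.
  set (G := Rpower T ((al - be - 1)/2)) in *.
  set (Rr := Rpower T ((al-1)/2)) in *.
  set (a := Rabs v) in *.
  assert (HS : u^2 + v^2 = a^2 * T) by (unfold u, T; rewrite Hva; field; lra).
  rewrite HS.
  replace (Defs.c1 K be) with (be / (2*K)) by reflexivity.
  assert (Hu' : u = a / K) by reflexivity. rewrite Hu'.
  match goal with |- ?L <= 0 => replace L with (A * Z * (be / (K*a)) * (P*G/2 - 1/T)) end.
  2: { field. repeat split; lra. }
  rewrite HPG.
  assert (0 < A * Z * (be / (K*a))). { apply Rmult_lt_0_compat. nra. apply Rdiv_lt_0_compat; nra. }
  assert (1/2 <= 1/T). { apply Rmult_le_reg_l with (2*T). lra. field_simplify; lra. }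
  nra.
Qed.

Theorem lemma7p1 (h p1 p2 q1 q2 a1 a2 b1 b2 : R) :
  0 < h < 1 ->
  0 < p1 -> 0 < p2 -> q1 = 0 -> 0 < q2 ->
  0 < alpha_h h * p1 - (1 - h) * q1 ->
  alpha_h h * p1 - (1 - h) * q1 = b1 -> b1 < a1 -> a1 < 1 ->
  0 < alpha_h h * p2 - (1 - h) * q2 ->
  alpha_h h * p2 - (1 - h) * q2 = b2 -> b2 < a2 -> a2 < 1 ->
  q2 > 1/3 * p2 + 1/2 * a2 ->
  p2 > p1 ->
  p2 + 3/2 * a2 > p1 + 3/2 * a1 ->
  exists C0 : R, 0 < C0 /\
    forall C : R, C0 <= C ->
    forall u v z : R, C * u = Rabs v -> v <> 0 -> 0 < z <= 1 ->
      du_diff_nonpos C p1 q1 a1 b1 u v z /\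
      du_diff_nonpos C p2 q2 a2 b2 u v z.
Proof.
  intros. exists 1. split. lra.
  intros C HC u v z Hu Hv Hz.
  assert (u = Rabs v / C) by (rewrite <- Hu; field; lra).
  subst u. split; apply key; auto; lra.
Qed.
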